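(* For every $L>\pi\sqrt2$, $a_L(L)=2\,b_L(L/2)$.
   Context: For $\alpha\in(0,1/\sqrt2)$ let $L_\alpha=\pi/\mathrm{AGM}(\alpha,\tfrac12\sqrt{1+2\alpha^2})$ (arithmetic–geometric mean); $\alpha\mapsto L_\alpha$ is a decreasing bijection from $(0,1/\sqrt2)$ onto $(\pi\sqrt2,\infty)$. For $L>\pi\sqrt2$ let $\alpha$ satisfy $L_\alpha=L$ and let $x_0>y_0>0$ satisfy $x_0^2+y_0^2=1$, $x_0y_0=\alpha^2$. Let $(x_L,y_L,z_L)(t)$ solve $x'=-xz$, $y'=yz$, $z'=x^2-y^2$ ($'=d/dt$) with initial value $(x_0,y_0,0)$, and let $a_L,b_L$ solve $a'=2x_L+az_L$, $b'=2y_L-bz_L$ with $a_L(0)=b_L(0)=0$. *)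

(* Defs.v *)
From Stdlib Require Import Reals Lra.
From Coquelicot Require Import Coquelicot.
Open Scope R_scope.

Fixpoint agm_pair (a b : R) (n : nat) : R * R :=
  match n with
  | O => (a, b)
  | S n => let p := agm_pair a b n in ((fst p + snd p) / 2, sqrt (fst p * snd p))
  end.

Definition AGM (a b : R) : R := real (Lim_seq (fun n => fst (agm_pair a b n))).

Definition L_of (alpha : R) : R := PI / AGM alpha (sqrt (1 + 2 * alpha ^ 2) / 2).

(* Main.v *)
Require Import Defs.
From Stdlib Require Import Reals Lra Lia Psatz.
From Coquelicot Require Import Coquelicot.
Open Scope R_scope.

Ltac rwD := repeat match goal with
 | H : forall s, is_derive ?f s _ |- context [Derive (fun x : R => ?f x) ?t] =>
     rewrite (is_derive_unique (fun x : R => f x) t _ (H t))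
 end.
Ltac exD := repeat match goal with
 | |- _ /\ _ => split
 | |- True => exact I
 | |- ex_derive (fun x => ?f x) ?t => eexists; match goal with H: forall s, is_derive f s _ |- _ => apply H end
 | |- ex_derive ?f ?t => eexists; match goal with H: forall s, is_derive f s _ |- _ => apply H end
 end.

Lemma eqR (x y : R) : x = y -> x = y.
Proof. auto. Qed.

Lemma deriv0_const (f : R -> R) : (forall t, is_derive f t 0) -> forall u v, f u = f v.
Proof.
intros H u v.
destruct (MVT_gen f u v (fun _ => 0)) as [c [_ Hc]].
- intros; apply H.
- intros x _. apply continuity_pt_filterlim. apply (ex_derive_continuous f x). eexists; apply H.
- lra.
Qed.

Lemma same_deriv (F G d : R -> R) : (forall t, is_derive F t (d t)) -> (forall t, is_derive G t (d t)) ->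
  forall u v, F v - F u = G v - G u.
Proof.
intros HF HG u v.
assert (H := deriv0_const (fun t => F t - G t)).
assert (E: F v - G v = F u - G u).
{ apply H. intro t. auto_derive; exD. rwD. ring. }
lra.
Qed.

Lemma prim_deriv (f : R -> R) : (forall t, continuous f t) -> forall t, is_derive (fun u => RInt f 0 u) t (f t).
Proof.
intros Hc t. apply is_derive_RInt with (a := 0); auto.
apply filter_forall. intro b0. apply RInt_correct. apply ex_RInt_continuous. intros; auto.
Qed.

Lemma prim0 (f : R -> R) : RInt f 0 0 = 0.
Proof. exact (RInt_point 0 f). Qed.

Lemma deriv_cont (f df : R -> R) : (forall t, is_derive f t (df t)) -> continuity f.
Proof.
intros H t. apply continuity_pt_filterlim. apply (ex_derive_continuous f t). eexists; apply H.
Qed.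

Lemma deriv_cont' (f df : R -> R) : (forall t, is_derive f t (df t)) -> forall t, continuous f t.
Proof.
intros H t. apply (ex_derive_continuous f t). eexists; apply H.
Qed.

Lemma mvt_pos (f df : R -> R) (u v : R) : (forall t, is_derive f t (df t)) -> (forall t, 0 < df t) ->
  u < v -> f u < f v.
Proof.
intros H Hp Huv.
destruct (MVT_gen f u v df) as [c [_ Hc]].
- intros; apply H.
- intros t _. apply (deriv_cont f df H).
- specialize (Hp c). nra.
Qed.

Lemma rot_lemma (C S w th : R -> R) :
  (forall t, is_derive C t (- (S t * w t))) -> (forall t, is_derive S t (C t * w t)) ->
  (forall t, is_derive th t (w t)) -> C 0 = 1 -> S 0 = 0 -> th 0 = 0 ->
  forall t, C t = cos (th t) /\ S t = sin (th t).
Proof.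
intros HC HS Hth C0 S0 th0 t.
assert (E1 : C t * cos (th t) + S t * sin (th t) = 1).
{ transitivity (C 0 * cos (th 0) + S 0 * sin (th 0)).
  - apply (deriv0_const (fun t => C t * cos (th t) + S t * sin (th t))).
    intro s. auto_derive; exD. rwD. ring.
  - rewrite C0, S0, th0, sin_0, cos_0. ring. }
assert (E2 : S t * cos (th t) - C t * sin (th t) = 0).
{ transitivity (S 0 * cos (th 0) - C 0 * sin (th 0)).
  - apply (deriv0_const (fun t => S t * cos (th t) - C t * sin (th t))).
    intro s. auto_derive; exD. rwD. ring.
  - rewrite S0, th0, sin_0. ring. }
pose proof (sin2_cos2 (th t)) as P. unfold Rsqr in P.
split.
- transitivity (cos (th t) * (C t * cos (th t) + S t * sin (th t)) - sin (th t) * (S t * cos (th t) - C t * sin (th t))).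
  + rewrite <- (Rmult_1_r (C t)) at 1. rewrite <- P. ring.
  + rewrite E1, E2. ring.
- transitivity (sin (th t) * (C t * cos (th t) + S t * sin (th t)) + cos (th t) * (S t * cos (th t) - C t * sin (th t))).
  + rewrite <- (Rmult_1_r (S t)) at 1. rewrite <- P. ring.
  + rewrite E1, E2. ring.
Qed.
Definition Xf a b u := a^2 * cos u ^2 + b^2 * sin u ^2.
Definition Jf a b u := / sqrt (Xf a b u).
Definition Pr a b v : R := RInt (Jf a b) 0 v.
Definition Ia a b : R := Pr a b (PI/2).

Lemma sc1 u : cos u ^ 2 + sin u ^ 2 = 1.
Proof. pose proof (sin2_cos2 u) as P. unfold Rsqr in P. nra. Qed.

Lemma comb_pos a b u : 0 < a -> 0 < b -> 0 < a * cos u ^ 2 + b * sin u ^ 2.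
Proof.
intros Ha Hb. pose proof (sc1 u).
destruct (Req_dec (cos u) 0) as [E|E].
- rewrite E in *. nra.
- assert (0 < cos u ^ 2) by (simpl; nra). assert (0 <= sin u ^ 2) by (simpl; nra). nra.
Qed.

Lemma Xf_pos a b u : 0 < a -> 0 < b -> 0 < Xf a b u.
Proof. intros. unfold Xf. apply comb_pos; simpl; nra. Qed.

Lemma Jf_deriv a b u : 0 < a -> 0 < b -> ex_derive (Jf a b) u.
Proof.
intros Ha Hb. pose proof (Xf_pos a b u Ha Hb) as H. unfold Jf, Xf in *.
auto_derive. split. simpl in H. lra. split; [|exact I].
apply Rgt_not_eq. apply sqrt_lt_R0. simpl in H; lra.
Qed.

Lemma Jf_cont a b u : 0 < a -> 0 < b -> continuous (Jf a b) u.
Proof. intros. apply (ex_derive_continuous (Jf a b) u). apply Jf_deriv; auto. Qed.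

Lemma Pr_deriv a b : 0 < a -> 0 < b -> forall t, is_derive (Pr a b) t (Jf a b t).
Proof. intros. unfold Pr. apply prim_deriv. intros; apply Jf_cont; auto. Qed.

Lemma Pr0 a b : Pr a b 0 = 0.
Proof. apply prim0. Qed.

Lemma Jf_pos a b u : 0 < a -> 0 < b -> 0 < Jf a b u.
Proof. intros. unfold Jf. apply Rinv_0_lt_compat, sqrt_lt_R0, Xf_pos; auto. Qed.

Lemma Jf_bounds a b u : 0 < b -> b <= a -> / a <= Jf a b u <= / b.
Proof.
intros Hb Hba. pose proof (sc1 u).
assert (H1 : b^2 <= Xf a b u).
{ unfold Xf. assert (0 <= cos u ^2) by (simpl; nra). assert (b^2 <= a^2) by (simpl; nra). nra. }
assert (H2 : Xf a b u <= a^2).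
{ unfold Xf. assert (0 <= sin u ^2) by (simpl; nra). assert (b^2 <= a^2) by (simpl; nra). nra. }
assert (S1 : b <= sqrt (Xf a b u)).
{ apply Rle_trans with (sqrt (b^2)); [rewrite sqrt_pow2; lra | apply sqrt_le_1_alt; auto]. }
assert (S2 : sqrt (Xf a b u) <= a).
{ apply Rle_trans with (sqrt (a^2)); [apply sqrt_le_1_alt; auto | rewrite sqrt_pow2; lra]. }
unfold Jf. split; apply Rinv_le_contravar; lra.
Qed.

Lemma I_bounds a b : 0 < b -> b <= a -> PI / 2 / a <= Ia a b <= PI / 2 / b.
Proof.
intros Hb Hba.
destruct (MVT_gen (Pr a b) 0 (PI/2) (Jf a b)) as [c [_ Hc]].
- intros; apply Pr_deriv; lra.
- intros t _. apply (deriv_cont _ _ (Pr_deriv a b ltac:(lra) Hb)).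
- unfold Ia. rewrite Pr0 in Hc. rewrite Rminus_0_r in Hc. rewrite Hc.
  pose proof (Jf_bounds a b c Hb Hba). pose proof PI_RGT_0.
  unfold Rdiv. split; nra.
Qed.

Lemma I_pos a b : 0 < b -> b <= a -> 0 < Ia a b.
Proof.
intros. pose proof (I_bounds a b H H0). pose proof PI_RGT_0.
assert (0 < PI/2/a). { apply Rdiv_lt_0_compat; lra. } lra.
Qed.

Lemma I_sym a b : 0 < a -> 0 < b -> Ia a b = Ia b a.
Proof.
intros Ha Hb.
pose proof (Pr_deriv b a Hb Ha) as H.
assert (E := same_deriv (Pr a b) (fun v => - Pr b a (PI/2 - v)) (Jf a b) (Pr_deriv a b Ha Hb)).
assert (E' : forall t, is_derive (fun v => - Pr b a (PI/2 - v)) t (Jf a b t)).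
{ intro t. auto_derive; exD. rwD.
  replace (- (- (1) * Jf b a (PI / 2 + - t))) with (Jf b a (PI/2 - t)) by (unfold Rminus; ring).
  unfold Jf, Xf. rewrite sin_shift, cos_shift.
  replace (b^2 * sin t^2 + a^2 * cos t^2) with (a^2*cos t^2 + b^2 * sin t^2) by ring. reflexivity. }
specialize (E E' 0 (PI/2)). simpl in E. rewrite Pr0 in E.
replace (PI/2 - PI/2) with 0 in E by ring. replace (PI/2 - 0) with (PI/2) in E by ring.
rewrite Pr0 in E. unfold Ia. lra.
Qed.
Lemma Jf_scale k a b u : 0 < k -> 0 < a -> 0 < b -> Jf (k*a) (k*b) u = Jf a b u / k.
Proof.
intros Hk Ha Hb. unfold Jf.
replace (Xf (k*a) (k*b) u) with (k^2 * Xf a b u) by (unfold Xf; ring).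
rewrite sqrt_mult; [| simpl; nra | left; apply Xf_pos; auto].
rewrite sqrt_pow2 by lra.
pose proof (sqrt_lt_R0 _ (Xf_pos a b u Ha Hb)).
field. lra.
Qed.

Lemma I_scale k a b : 0 < k -> 0 < a -> 0 < b -> Ia (k*a) (k*b) = Ia a b / k.
Proof.
intros Hk Ha Hb.
assert (E := same_deriv (Pr (k*a) (k*b)) (fun v => Pr a b v / k) (fun v => Jf a b v / k)).
pose proof (Pr_deriv a b Ha Hb) as H.
assert (E1 : forall t, is_derive (Pr (k*a) (k*b)) t (Jf a b t / k)).
{ intro t. rewrite <- Jf_scale by auto. apply Pr_deriv; nra. }
assert (E2 : forall t, is_derive (fun v => Pr a b v / k) t (Jf a b t / k)).
{ intro t. auto_derive; exD. rwD. unfold Rdiv. ring. }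
specialize (E E1 E2 0 (PI/2)). simpl in E. rewrite !Pr0 in E. unfold Ia. lra.
Qed.

Lemma Pr_pi a b : 0 < a -> 0 < b -> Pr a b PI = 2 * Ia a b.
Proof.
intros Ha Hb.
pose proof (Pr_deriv a b Ha Hb) as H.
assert (E := same_deriv (Pr a b) (fun v => - Pr a b (PI - v)) (Jf a b) H).
assert (E' : forall t, is_derive (fun v => - Pr a b (PI - v)) t (Jf a b t)).
{ intro t. auto_derive; exD. rwD.
  replace (- (- (1) * Jf a b (PI + - t))) with (Jf a b (PI - t)) by (unfold Rminus; ring).
  unfold Jf, Xf. rewrite sin_PI_x, Rtrigo_facts.cos_pi_minus.
  replace ((- cos t)^2) with (cos t ^2) by ring. reflexivity. }
specialize (E E' 0 (PI/2)). simpl in E. rewrite Pr0 in E.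
replace (PI - PI/2) with (PI/2) in E by field. replace (PI - 0) with PI in E by ring.
unfold Ia. lra.
Qed.

Lemma Pr_shift a b v : 0 < a -> 0 < b -> Pr a b (v + PI) = Pr a b PI + Pr a b v.
Proof.
intros Ha Hb.
pose proof (Pr_deriv a b Ha Hb) as H.
assert (E := same_deriv (Pr a b) (fun v => Pr a b (v + PI)) (Jf a b) H).
assert (E' : forall t, is_derive (fun v => Pr a b (v + PI)) t (Jf a b t)).
{ intro t. auto_derive; exD. rwD.
  replace (1 * Jf a b (t + PI)) with (Jf a b (t + PI)) by ring.
  unfold Jf, Xf. rewrite neg_sin, neg_cos.
  replace ((- cos t)^2) with (cos t ^2) by ring. replace ((- sin t)^2) with (sin t ^2) by ring. reflexivity. }
specialize (E E' 0 v). simpl in E. rewrite Pr0 in E.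
replace (0 + PI) with PI in E by ring. lra.
Qed.

Lemma Pr_incr a b u v : 0 < a -> 0 < b -> u < v -> Pr a b u < Pr a b v.
Proof.
intros Ha Hb Huv. apply (mvt_pos _ (Jf a b)); auto.
- apply Pr_deriv; auto.
- intros; apply Jf_pos; auto.
Qed.

Lemma Pr_inj a b u v : 0 < a -> 0 < b -> Pr a b u = Pr a b v -> u = v.
Proof.
intros Ha Hb E. destruct (Rtotal_order u v) as [H|[H|H]]; auto.
- pose proof (Pr_incr a b u v Ha Hb H). lra.
- pose proof (Pr_incr a b v u Ha Hb H). lra.
Qed.
Lemma angle_pi (th : R -> R) (T : R) : continuity th -> th 0 = 0 -> 0 < T -> 0 < th T ->
  (forall t, 0 < t < T -> sin (th t) <> 0) -> cos (th T) = -1 -> th T = PI.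
Proof.
intros Hc H0 HT HpT Hs HcT.
assert (Hle : th T <= PI).
{ destruct (Rle_or_lt (th T) PI) as [h|h]; auto. exfalso.
  destruct (IVT (fun t => th t - PI) 0 T) as [t [Ht Et]].
  - intro u. apply continuity_pt_minus; [apply Hc | apply continuity_pt_const; unfold constant; auto].
  - auto.
  - rewrite H0. pose proof PI_RGT_0. lra.
  - lra.
  - simpl in Et. assert (th t = PI) by lra. pose proof PI_RGT_0.
    assert (t <> 0) by (intro E; rewrite E in *; lra).
    assert (t <> T) by (intro E; rewrite E in *; lra).
    apply (Hs t); [lra|]. rewrite H. apply sin_PI. }
assert (Hs0 : sin (th T) = 0).
{ pose proof (sin2_cos2 (th T)) as P. unfold Rsqr in P. rewrite HcT in P. nra. }
destruct (sin_eq_0_0 _ Hs0) as [k Hk].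
pose proof PI_RGT_0.
assert (K1 : 0 < IZR k). { rewrite Hk in HpT. nra. }
assert (K2 : IZR k <= 1). { rewrite Hk in Hle. nra. }
apply lt_0_IZR in K1.
assert (k = 1%Z). { apply le_IZR in K2. lia. }
subst k. rewrite Hk. simpl. ring.
Qed.
Lemma Jf_sq a b u : 0 < a -> 0 < b -> Jf a b u * Jf a b u * Xf a b u = 1.
Proof.
intros Ha Hb. pose proof (Xf_pos a b u Ha Hb). unfold Jf.
assert (sqrt (Xf a b u) * sqrt (Xf a b u) = Xf a b u) by (apply sqrt_sqrt; lra).
pose proof (sqrt_lt_R0 _ H). set (D := sqrt (Xf a b u)) in *. rewrite <- H0. field. lra.
Qed.

Lemma Xf_der a b : forall u, is_derive (Xf a b) u (2 * (b^2 - a^2) * sin u * cos u).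
Proof. intro u. unfold Xf. auto_derive; [exact I|]. ring. Qed.

Lemma Jf_der a b : 0 < a -> 0 < b -> forall u,
  is_derive (Jf a b) u (- ((b^2 - a^2) * sin u * cos u * Jf a b u / Xf a b u)).
Proof.
intros Ha Hb u. pose proof (Xf_pos a b u Ha Hb) as H.
pose proof (sqrt_lt_R0 _ H) as H1.
assert (H2 : sqrt (Xf a b u) * sqrt (Xf a b u) = Xf a b u) by (apply sqrt_sqrt; lra).
pose proof (Xf_der a b) as HX.
unfold Jf in *.
auto_derive; exD.
- lra.
- lra.
- rwD. rewrite H2. field. lra.
Qed.
Definition Mf a b u := a * cos u ^2 + b * sin u ^2.
Definition hd a b u := (a+b) * Mf a b u / Xf a b u.
Definition Cf a b u := (a * cos u ^2 - b * sin u ^2) * Jf a b u.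
Definition Sf a b u := (a+b) * sin u * cos u * Jf a b u.
Definition hh a b v : R := RInt (hd a b) 0 v.

Lemma hd_der a b : 0 < a -> 0 < b -> forall u, ex_derive (hd a b) u.
Proof.
intros Ha Hb u. pose proof (Xf_pos a b u Ha Hb). pose proof (Xf_der a b) as HX.
unfold hd, Mf. auto_derive; exD. lra.
Qed.

Lemma hd_pos a b u : 0 < a -> 0 < b -> 0 < hd a b u.
Proof.
intros Ha Hb. unfold hd. pose proof (Xf_pos a b u Ha Hb). pose proof (comb_pos a b u Ha Hb).
unfold Mf. apply Rdiv_lt_0_compat; auto. nra.
Qed.

Lemma hh_der a b : 0 < a -> 0 < b -> forall t, is_derive (hh a b) t (hd a b t).
Proof.
intros Ha Hb. unfold hh. apply prim_deriv. intro t.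
apply (ex_derive_continuous (hd a b) t). apply hd_der; auto.
Qed.

Lemma Cf_der a b : 0 < a -> 0 < b -> forall u, is_derive (Cf a b) u (- (Sf a b u * hd a b u)).
Proof.
intros Ha Hb u. pose proof (Xf_pos a b u Ha Hb). pose proof (Jf_der a b Ha Hb) as HJ.
unfold Cf, Sf, hd, Mf. auto_derive; exD. rwD. apply eqR. unfold Xf in *. field. lra.
Qed.

Lemma Sf_der a b : 0 < a -> 0 < b -> forall u, is_derive (Sf a b) u (Cf a b u * hd a b u).
Proof.
intros Ha Hb u. pose proof (Xf_pos a b u Ha Hb). pose proof (Jf_der a b Ha Hb) as HJ.
unfold Cf, Sf, hd, Mf. auto_derive; exD. rwD. apply eqR. unfold Xf in *. field. lra.
Qed.
Lemma gauss a b : 0 < a -> 0 < b -> Ia ((a+b)/2) (sqrt (a*b)) = Ia a b.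
Proof.
intros Ha Hb.
set (a1 := (a+b)/2). set (b1 := sqrt (a*b)).
assert (Ha1 : 0 < a1) by (unfold a1; lra).
assert (Hb1 : 0 < b1) by (unfold b1; apply sqrt_lt_R0; nra).
assert (hh0 : hh a b 0 = 0) by apply prim0.
assert (C0 : Cf a b 0 = 1).
{ unfold Cf, Jf, Xf. rewrite cos_0, sin_0.
  replace (a ^ 2 * 1 ^ 2 + b ^ 2 * 0 ^ 2) with (a^2) by ring. rewrite sqrt_pow2 by lra. field. lra. }
assert (S0 : Sf a b 0 = 0) by (unfold Sf; rewrite sin_0; ring).
pose proof (rot_lemma (Cf a b) (Sf a b) (hd a b) (hh a b) (Cf_der a b Ha Hb) (Sf_der a b Ha Hb)
  (hh_der a b Ha Hb) C0 S0 hh0) as ROT.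
pose proof PI_RGT_0 as Hpi.
assert (Hpi2 : hh a b (PI/2) = PI).
{ apply angle_pi.
  - apply (deriv_cont _ _ (hh_der a b Ha Hb)).
  - auto.
  - lra.
  - rewrite <- hh0. apply (mvt_pos _ (hd a b)). apply hh_der; auto. intros; apply hd_pos; auto. lra.
  - intros t Ht. destruct (ROT t) as [_ E]. rewrite <- E. unfold Sf.
    assert (0 < sin t) by (apply sin_gt_0; lra).
    assert (0 < cos t) by (apply cos_gt_0; lra).
    pose proof (Jf_pos a b t Ha Hb).
    apply Rgt_not_eq. apply Rmult_gt_0_compat; [|auto]. apply Rmult_gt_0_compat; [|auto]. nra.
  - destruct (ROT (PI/2)) as [E _]. rewrite <- E. unfold Cf, Jf, Xf. rewrite cos_PI2, sin_PI2.
    replace (a ^ 2 * 0 ^ 2 + b ^ 2 * 1 ^ 2) with (b^2) by ring. rewrite sqrt_pow2 by lra. field. lra. }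
assert (KEY : forall t, Jf a1 b1 (hh a b t) * hd a b t = 2 * Jf a b t).
{ intro t. destruct (ROT t) as [EC ES].
  pose proof (Jf_sq a b t Ha Hb) as HE. pose proof (Jf_pos a b t Ha Hb) as HE0.
  pose proof (Xf_pos a b t Ha Hb) as HX0.
  pose proof (comb_pos a b t Ha Hb) as HM.
  assert (XE : Xf a1 b1 (hh a b t) = ((a+b) * Mf a b t * Jf a b t / 2)^2).
  { unfold Xf at 1. rewrite <- EC, <- ES. unfold Cf, Sf, Mf, a1.
    replace (b1^2) with (a*b) by (unfold b1; rewrite pow2_sqrt; nra). field. }
  unfold Jf at 1. rewrite XE. rewrite sqrt_pow2.
  2:{ unfold Mf. apply Rlt_le. apply Rmult_lt_0_compat; [|lra]. apply Rmult_lt_0_compat; [|lra]. nra. }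
  unfold hd, Mf in *. set (E := Jf a b t) in *. set (X := Xf a b t) in *.
  replace X with (/ (E*E)) by (field_simplify; [|lra]; rewrite <- HE; field; lra).
  field. split; lra. }
assert (E := same_deriv (fun t => Pr a1 b1 (hh a b t)) (fun t => 2 * Pr a b t) (fun t => 2 * Jf a b t)).
pose proof (Pr_deriv a1 b1 Ha1 Hb1) as HP1.
pose proof (Pr_deriv a b Ha Hb) as HP.
pose proof (hh_der a b Ha Hb) as HH.
assert (D1 : forall t, is_derive (fun t => Pr a1 b1 (hh a b t)) t (2 * Jf a b t)).
{ intro t. rewrite <- KEY. auto_derive; exD. rwD. apply eqR. ring. }
assert (D2 : forall t, is_derive (fun t => 2 * Pr a b t) t (2 * Jf a b t)).
{ intro t. auto_derive; exD. rwD. apply eqR. ring. }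
specialize (E D1 D2 0 (PI/2)). simpl in E. rewrite Hpi2, hh0, !Pr0, Pr_pi in E by auto.
unfold Ia in *. lra.
Qed.
Lemma agm_S a b n : agm_pair a b (S n) =
  ((fst (agm_pair a b n) + snd (agm_pair a b n)) / 2, sqrt (fst (agm_pair a b n) * snd (agm_pair a b n))).
Proof. reflexivity. Qed.

Lemma agm_fS a b n : fst (agm_pair a b (S n)) = (fst (agm_pair a b n) + snd (agm_pair a b n)) / 2.
Proof. reflexivity. Qed.
Lemma agm_sS a b n : snd (agm_pair a b (S n)) = sqrt (fst (agm_pair a b n) * snd (agm_pair a b n)).
Proof. reflexivity. Qed.

Lemma agm_pos a b : 0 < a -> 0 < b -> forall n, 0 < fst (agm_pair a b n) /\ 0 < snd (agm_pair a b n).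
Proof.
intros Ha Hb n. induction n as [|n [H1 H2]].
- simpl. auto.
- rewrite agm_fS, agm_sS. split; [lra|]. apply sqrt_lt_R0. nra.
Qed.

Lemma agm_inv a b : 0 < a -> 0 < b -> forall n, Ia (fst (agm_pair a b n)) (snd (agm_pair a b n)) = Ia a b.
Proof.
intros Ha Hb n. induction n as [|n IH].
- reflexivity.
- rewrite agm_fS, agm_sS. destruct (agm_pos a b Ha Hb n). rewrite gauss; auto.
Qed.

Lemma amgm x y : 0 < x -> 0 < y -> sqrt (x*y) <= (x+y)/2.
Proof.
intros. apply Rle_trans with (sqrt (((x+y)/2)^2)).
- apply sqrt_le_1_alt. pose proof (pow2_ge_0 (x-y)). simpl in *. nra.
- rewrite sqrt_pow2; lra.
Qed.

Lemma agm_le a b : 0 < a -> 0 < b -> forall n, snd (agm_pair a b (S n)) <= fst (agm_pair a b (S n)).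
Proof.
intros Ha Hb n. rewrite agm_fS, agm_sS. destruct (agm_pos a b Ha Hb n). apply amgm; auto.
Qed.

Lemma div_swap p x y : 0 < x -> 0 < y -> p / x <= y -> p / y <= x.
Proof.
intros Hx Hy H.
assert (E1 : p = p / x * x) by (field; lra).
assert (E2 : p / y = p * / y) by reflexivity.
assert (p <= y * x) by (rewrite E1; apply Rmult_le_compat_r; lra).
rewrite E2. replace x with (y * x * / y) by (field; lra).
apply Rmult_le_compat_r; [left; apply Rinv_0_lt_compat|]; lra.
Qed.

Lemma div_swap' p x y : 0 < x -> 0 < y -> y <= p / x -> x <= p / y.
Proof.
intros Hx Hy H.
assert (E1 : p = p / x * x) by (field; lra).
assert (y * x <= p) by (rewrite E1; apply Rmult_le_compat_r; lra).
replace x with (y * x * / y) by (field; lra).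
apply Rmult_le_compat_r; [left; apply Rinv_0_lt_compat|]; lra.
Qed.

Lemma agm_thm a b : 0 < a -> 0 < b -> Ia a b = PI / (2 * AGM a b).
Proof.
intros Ha Hb.
set (u := fun n => fst (agm_pair a b (S n))).
set (v := fun n => snd (agm_pair a b (S n))).
assert (Hu : forall n, u n = fst (agm_pair a b (S n))) by reflexivity.
assert (Hdec : forall n, u (S n) <= u n).
{ intro n. unfold u. rewrite (agm_fS a b (S n)). pose proof (agm_le a b Ha Hb n). lra. }
assert (Hpos : forall n, 0 <= u n). { intro n. unfold u. destruct (agm_pos a b Ha Hb (S n)). lra. }
destruct (ex_finite_lim_seq_decr u 0 Hdec Hpos) as [l0 Hl0].
destruct (ex_intro (fun m : R => m = l0) l0 eq_refl) as [l El].
rewrite <- El in Hl0. rename Hl0 into Hl. clear El.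
assert (HA : AGM a b = l).
{ unfold AGM. rewrite <- Lim_seq_incr_1. fold u. rewrite (is_lim_seq_unique _ _ Hl). reflexivity. }
rewrite HA.
set (II := Ia a b).
assert (HI : forall n, PI / 2 / u n <= II <= PI / 2 / v n).
{ intro n. unfold II. rewrite <- (agm_inv a b Ha Hb (S n)). fold (u n) (v n).
  destruct (agm_pos a b Ha Hb (S n)). apply I_bounds. auto. apply agm_le; auto. }
assert (Ipos : 0 < II). { unfold II. rewrite <- (agm_inv a b Ha Hb 1). destruct (agm_pos a b Ha Hb 1).
  apply I_pos; auto. apply agm_le; auto. }
pose proof PI_RGT_0.
set (K := PI / 2 / II).
assert (Kpos : 0 < K) by (unfold K; apply Rdiv_lt_0_compat; lra).
assert (H1 : forall n, K <= u n).
{ intro n. destruct (HI n) as [A _]. destruct (agm_pos a b Ha Hb (S n)) as [P1 _]. fold (u n) in P1.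
  unfold K. apply div_swap; auto. }
assert (H2 : forall n, v n <= K).
{ intro n. destruct (HI n) as [_ A]. destruct (agm_pos a b Ha Hb (S n)) as [_ P1]. fold (v n) in P1.
  unfold K. apply div_swap'; auto. }
assert (L1 : K <= l).
{ pose proof (is_lim_seq_le (fun _ => K) u K l H1 (is_lim_seq_const K) Hl). simpl in H0. auto. }
assert (L2 : l <= (l + K) / 2).
{ assert (Hs : is_lim_seq (fun n => u (S n)) l) by (apply -> is_lim_seq_incr_1; auto).
  assert (Hw : is_lim_seq (fun n => / 2 * (u n + K)) (/2 * (l + K))).
  { apply (is_lim_seq_scal_l _ (/2) (Finite (l + K))). apply is_lim_seq_plus'; auto. apply is_lim_seq_const. }
  assert (Hle : forall n, u (S n) <= / 2 * (u n + K)).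
  { intro n. unfold u. rewrite (agm_fS a b (S n)). pose proof (H2 n). unfold v in H0. lra. }
  pose proof (is_lim_seq_le _ _ _ _ Hle Hs Hw). simpl in H0. lra. }
assert (l = K) by lra.
rewrite H0. unfold K. field. lra.
Qed.
Lemma Xf_shift a b v : Xf a b (v + PI) = Xf a b v.
Proof. unfold Xf. rewrite neg_cos, neg_sin. ring. Qed.

Lemma Jf_shift a b v : Jf a b (v + PI) = Jf a b v.
Proof. unfold Jf. rewrite Xf_shift. reflexivity. Qed.

Lemma pos_everywhere (f : R -> R) : continuity f -> (forall t, f t <> 0) -> 0 < f 0 -> forall t, 0 < f t.
Proof.
intros Hc Hn H0 t.
destruct (Rlt_or_le 0 (f t)) as [h|h]; auto. exfalso.
assert (f t < 0) by (destruct h; auto; exfalso; apply (Hn t); auto).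
destruct (Rtotal_order t 0) as [Ht|[Ht|Ht]].
- destruct (IVT f t 0 Hc Ht H H0) as [c [_ Ec]]. apply (Hn c); auto.
- subst. lra.
- destruct (IVT (fun s => - f s) 0 t) as [c [_ Ec]].
  + intro u. apply continuity_pt_opp. apply Hc.
  + auto.
  + lra.
  + lra.
  + apply (Hn c). simpl in Ec. lra.
Qed.

Definition Sq a b u := sqrt (Xf a b u).

Lemma Sq_der a b : 0 < a -> 0 < b -> forall u, is_derive (Sq a b) u ((b^2 - a^2) * sin u * cos u * Jf a b u).
Proof.
intros Ha Hb u. pose proof (Xf_pos a b u Ha Hb). pose proof (Xf_der a b) as HX.
unfold Sq, Jf. auto_derive; exD. lra. rwD. apply eqR. field. apply Rgt_not_eq, sqrt_lt_R0. lra.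
Qed.

Lemma Sq_Jf a b u : 0 < a -> 0 < b -> Sq a b u * Jf a b u = 1.
Proof.
intros Ha Hb. unfold Sq, Jf. pose proof (sqrt_lt_R0 _ (Xf_pos a b u Ha Hb)). field. lra.
Qed.
Theorem lemma5p2 :
  forall (L alpha x0 y0 : R) (x y z a b : R -> R),
    PI * sqrt 2 < L ->
    0 < alpha < / sqrt 2 ->
    L_of alpha = L ->
    x0 > y0 -> y0 > 0 ->
    x0 ^ 2 + y0 ^ 2 = 1 ->
    x0 * y0 = alpha ^ 2 ->
    x 0 = x0 -> y 0 = y0 -> z 0 = 0 ->
    (forall t, is_derive x t (- (x t * z t))) ->
    (forall t, is_derive y t (y t * z t)) ->
    (forall t, is_derive z t (x t ^ 2 - y t ^ 2)) ->
    a 0 = 0 -> b 0 = 0 ->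
    (forall t, is_derive a t (2 * x t + a t * z t)) ->
    (forall t, is_derive b t (2 * y t - b t * z t)) ->
    a L = 2 * b (L / 2).
Proof.
intros L al x0 y0 x y z a b _ [Hal Hal2] HL Hxy Hy0 Hsum Hprod X0 Y0 Z0 Hx Hy Hz A0 B0 Ha Hb.
assert (Hal3 : al ^ 2 < / 2).
{ assert (0 < / sqrt 2) by lra. 
  assert (al * al < / sqrt 2 * / sqrt 2) by nra.
  rewrite <- Rinv_mult, sqrt_sqrt in H0 by lra. simpl. lra. }
assert (Hal4 : 0 < al ^ 2) by (simpl; nra).
set (p := sqrt (1 - 2 * al^2)).
set (q := sqrt (1 + 2 * al^2)).
assert (Hp : 0 < p) by (apply sqrt_lt_R0; lra).
assert (Hq : 0 < q) by (apply sqrt_lt_R0; lra).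
assert (Hp2 : p ^ 2 = 1 - 2 * al^2) by (apply pow2_sqrt; lra).
assert (Hq2 : q ^ 2 = 1 + 2 * al^2) by (apply pow2_sqrt; lra).
assert (H2a : 0 < 2 * al) by lra.
assert (C1 : forall t, x t * y t = al ^ 2).
{ intro t. rewrite <- Hprod, <- X0, <- Y0.
  apply (deriv0_const (fun t => x t * y t)). intro s. auto_derive; exD. rwD. ring. }
assert (C2 : forall t, x t ^ 2 + y t ^ 2 + z t ^ 2 = 1).
{ intro t. transitivity (x 0 ^ 2 + y 0 ^ 2 + z 0 ^ 2).
  - apply (deriv0_const (fun t => x t ^ 2 + y t ^ 2 + z t ^ 2)). intro s. auto_derive; exD. rwD. ring.
  - rewrite X0, Y0, Z0. lra. }
assert (Dw : forall t, is_derive (fun t => x t + y t) t (- (x t * z t) + y t * z t)).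
{ intro t. auto_derive; exD. rwD. ring. }
assert (Wpos : forall t, 0 < x t + y t).
{ apply (pos_everywhere (fun t => x t + y t)).
  - apply (deriv_cont _ _ Dw).
  - intros t E. specialize (C1 t). specialize (C2 t).
    cbv beta in E.
    assert (Q1 : z t ^ 2 <= 1) by (pose proof (pow2_ge_0 (x t)); pose proof (pow2_ge_0 (y t)); lra).
    assert (Q2 : (x t + y t)^2 = 1 + 2 * al^2 - z t ^2) by (rewrite <- C1, <- C2; ring).
    rewrite E in Q2. simpl in Q2. lra.
  - simpl. rewrite X0, Y0. lra. }
set (Psi := fun t => RInt (fun s => x s + y s) 0 t).
assert (DPsi : forall t, is_derive Psi t (x t + y t)).
{ unfold Psi. apply (prim_deriv (fun s => x s + y s)). apply (deriv_cont' _ _ Dw). }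
assert (Psi0 : Psi 0 = 0) by apply prim0.
assert (c0 : (x 0 - y 0) / p = 1).
{ rewrite X0, Y0. assert (x0 - y0 = p).
  { unfold p. replace (1 - 2 * al^2) with ((x0 - y0)^2) by (rewrite <- Hsum, <- Hprod; ring).
    rewrite sqrt_pow2; lra. }
  rewrite H. field. lra. }
pose proof (rot_lemma (fun t => (x t - y t) / p) (fun t => z t / p) (fun t => x t + y t) Psi) as ROT.
assert (ROT' : forall t, (x t - y t) / p = cos (Psi t) /\ z t / p = sin (Psi t)).
{ apply ROT; auto.
  - intro t. auto_derive; exD. rwD. apply eqR. field. lra.
  - intro t. auto_derive; exD. rwD. apply eqR. field. lra.
  - rewrite Z0. field. lra. }
clear ROT.
assert (Hzs : forall t, z t = p * sin (Psi t)).
{ intro t. destruct (ROT' t) as [_ E]. rewrite <- E. field. lra. }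
assert (Hxmy : forall t, x t - y t = p * cos (Psi t)).
{ intro t. destruct (ROT' t) as [E _]. rewrite <- E. field. lra. }
assert (Hsq : forall t, x t + y t = Sq q (2*al) (Psi t)).
{ intro t. assert (E : Xf q (2*al) (Psi t) = (x t + y t)^2).
  { replace ((x t + y t)^2) with (1 + 2 * al^2 - z t ^2) by (rewrite <- (C1 t), <- (C2 t); ring).
    rewrite Hzs. unfold Xf. rewrite Hq2.
    replace ((p * sin (Psi t))^2) with (p^2 * sin (Psi t)^2) by ring. rewrite Hp2.
    replace (cos (Psi t) ^2) with (1 - sin (Psi t)^2) by (pose proof (sc1 (Psi t)); lra). ring. }
  unfold Sq. rewrite E. rewrite sqrt_pow2; auto. left; auto. }
assert (HJ1 : forall t, Jf q (2*al) (Psi t) * (x t + y t) = 1).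
{ intro t. rewrite Hsq, Rmult_comm. apply Sq_Jf; auto. }
pose proof (Pr_deriv q (2*al) Hq H2a) as DPr.
assert (Phi : forall t, Pr q (2*al) (Psi t) = t).
{ intro t. assert (E := same_deriv (fun t => Pr q (2*al) (Psi t)) (fun t => t) (fun _ => 1)).
  assert (E1 : forall t, is_derive (fun t => Pr q (2*al) (Psi t)) t 1).
  { intro s. auto_derive; exD. rwD. apply eqR. transitivity (Jf q (2*al) (Psi s) * (x s + y s)); [ring | apply HJ1]. }
  assert (E2 : forall t, is_derive (fun t : R => t) t 1).
  { intro s. auto_derive; exD. ring. }
  specialize (E E1 E2 0 t). simpl in E. rewrite Psi0, Pr0 in E. lra. }
assert (HPI : Pr q (2*al) PI = L / 2).
{ rewrite Pr_pi by auto. rewrite I_sym by auto.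
  replace (Ia (2*al) q) with (Ia (2*al) (2*(q/2))) by (f_equal; field).
  rewrite I_scale by lra. rewrite agm_thm by lra.
  assert (IP : 0 < Ia al (q/2)).
  { unfold Ia. rewrite <- (Pr0 al (q/2)). apply Pr_incr; try lra. pose proof PI_RGT_0; lra. }
  rewrite agm_thm in IP by lra.
  unfold L_of in HL. fold q in HL.
  set (M := AGM al (q/2)) in *.
  assert (M <> 0). { intro E. rewrite E in IP. rewrite Rmult_0_r, Rdiv_0_r in IP. lra. }
  rewrite <- HL. field. auto. }
assert (H2PI : Pr q (2*al) (2*PI) = L).
{ replace (2*PI) with (PI + PI) by ring. rewrite Pr_shift by auto. lra. }
assert (PsiH : Psi (L/2) = PI).
{ apply (Pr_inj q (2*al)); auto. rewrite Phi. auto. }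
assert (PsiL : Psi L = 2 * PI).
{ apply (Pr_inj q (2*al)); auto. rewrite Phi. auto. }
set (Xa := fun u => (Sq q (2*al) u + p * cos u) / 2).
set (Yb := fun u => (Sq q (2*al) u - p * cos u) / 2).
assert (HxX : forall t, x t = Xa (Psi t)).
{ intro t. unfold Xa. rewrite <- Hsq, <- Hxmy. field. }
assert (HyY : forall t, y t = Yb (Psi t)).
{ intro t. unfold Yb. rewrite <- Hsq, <- Hxmy. field. }
pose proof (Sq_der q (2*al) Hq H2a) as DSq.
pose proof (Jf_der q (2*al) Hq H2a) as DJf.
set (fA := fun u => 2 * Xa u ^ 2 * Jf q (2*al) u).
set (fB := fun u => 2 * Yb u ^ 2 * Jf q (2*al) u).
assert (cA : forall u, continuous fA u).
{ intro u. apply (ex_derive_continuous fA u). unfold fA, Xa. auto_derive; exD. }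
assert (cB : forall u, continuous fB u).
{ intro u. apply (ex_derive_continuous fB u). unfold fB, Yb. auto_derive; exD. }
set (AF := fun u => RInt fA 0 u).
set (BF := fun u => RInt fB 0 u).
assert (DAF : forall t, is_derive AF t (fA t)) by (apply prim_deriv; auto).
assert (DBF : forall t, is_derive BF t (fB t)) by (apply prim_deriv; auto).
assert (AF0 : AF 0 = 0) by apply prim0.
assert (BF0 : BF 0 = 0) by apply prim0.
assert (Hax : forall t, a t * x t = AF (Psi t)).
{ intro t. assert (E := same_deriv (fun t => a t * x t) (fun t => AF (Psi t)) (fun t => 2 * x t ^ 2)).
  assert (E1 : forall t, is_derive (fun t => a t * x t) t (2 * x t ^ 2)).
  { intro s. auto_derive; exD. rwD. apply eqR. ring. }
  assert (E2 : forall t, is_derive (fun t => AF (Psi t)) t (2 * x t ^ 2)).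
  { intro s. auto_derive; exD. rwD. apply eqR. unfold fA. rewrite <- HxX.
    transitivity (2 * x s ^2 * (Jf q (2*al) (Psi s) * (x s + y s))); [ring | rewrite HJ1; ring]. }
  specialize (E E1 E2 0 t). simpl in E. rewrite Psi0, AF0, A0 in E. lra. }
assert (Hby : forall t, b t * y t = BF (Psi t)).
{ intro t. assert (E := same_deriv (fun t => b t * y t) (fun t => BF (Psi t)) (fun t => 2 * y t ^ 2)).
  assert (E1 : forall t, is_derive (fun t => b t * y t) t (2 * y t ^ 2)).
  { intro s. auto_derive; exD. rwD. apply eqR. ring. }
  assert (E2 : forall t, is_derive (fun t => BF (Psi t)) t (2 * y t ^ 2)).
  { intro s. auto_derive; exD. rwD. apply eqR. unfold fB. rewrite <- HyY.
    transitivity (2 * y s ^2 * (Jf q (2*al) (Psi s) * (x s + y s))); [ring | rewrite HJ1; ring]. }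
  specialize (E E1 E2 0 t). simpl in E. rewrite Psi0, BF0, B0 in E. lra. }
assert (Shift : AF (PI + PI) = AF PI + BF PI).
{ assert (E := same_deriv (fun v => AF (v + PI)) BF fB).
  assert (E1 : forall t, is_derive (fun v => AF (v + PI)) t (fB t)).
  { intro s. auto_derive; exD. rwD. apply eqR. unfold fA, fB, Xa, Yb, Sq.
    rewrite Xf_shift, Jf_shift, neg_cos. field. }
  specialize (E E1 DBF 0 PI). rewrite BF0, Rplus_0_l in E. lra. }
assert (Eq : AF PI = BF PI).
{ assert (E := same_deriv AF (fun v => BF v + 2 * p * sin v) fA).
  assert (E2 : forall t, is_derive (fun v => BF v + 2 * p * sin v) t (fA t)).
  { intro s. auto_derive; exD. rwD. apply eqR. unfold fA, fB, Xa, Yb. cbv beta.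
    pose proof (Sq_Jf q (2*al) s Hq H2a) as SJ.
    set (SS := Sq q (2*al) s) in *. set (J := Jf q (2*al) s) in *.
    transitivity (2 * ((SS - p * cos s) / 2) ^ 2 * J + 2 * p * cos s * (SS * J)); [rewrite SJ; field | field]. }
  specialize (E DAF E2 0 PI). rewrite AF0, BF0, sin_PI, sin_0 in E. lra. }
assert (SqPI : Sq q (2*al) PI = q).
{ unfold Sq, Xf. rewrite cos_PI, sin_PI. replace (q ^ 2 * (-1) ^ 2 + (2 * al) ^ 2 * 0 ^ 2) with (q^2) by ring.
  apply sqrt_pow2; lra. }
assert (Sq2PI : Sq q (2*al) (2*PI) = q).
{ unfold Sq, Xf. rewrite cos_2PI, sin_2PI. replace (q ^ 2 * 1 ^ 2 + (2 * al) ^ 2 * 0 ^ 2) with (q^2) by ring.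
  apply sqrt_pow2; lra. }
assert (xL : x L = (q + p) / 2).
{ rewrite HxX, PsiL. unfold Xa. rewrite Sq2PI, cos_2PI. field. }
assert (yH : y (L/2) = (q + p) / 2).
{ rewrite HyY, PsiH. unfold Yb. rewrite SqPI, cos_PI. field. }
assert (F1 : a L * x L = 2 * (b (L/2) * y (L/2))).
{ rewrite Hax, Hby, PsiL, PsiH. replace (2*PI) with (PI+PI) by ring. rewrite Shift, Eq. ring. }
rewrite xL, yH in F1.
apply Rmult_eq_reg_r with ((q + p) / 2). lra. lra.
Qed.
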